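(* Fix $k\ge1$ and a $k$-tuple of skew shapes $\boldsymbol\mu$ of total size $n$. For every $\mathbf{T}\in\mathrm{SYT}(\boldsymbol\mu)$ and $1<i<n$, the filling $D_i(\mathbf{T})$ is again in $\mathrm{SYT}(\boldsymbol\mu)$, satisfies $\mathrm{dDes}(D_i(\mathbf{T}))=\mathrm{dDes}(\mathbf{T})$ and $\mathrm{dinv}(D_i(\mathbf{T}))=\mathrm{dinv}(\mathbf{T})$. In particular $D_i$ is a well-defined involution on $\mathrm{SYT}(\boldsymbol\mu)$ preserving the diagonal inversion number.
   Context: Diagrams use French convention: a cell $(a,b)\in\mathbb{Z}^2$ ($a$ column, $b$ row), content $c(a,b)=a-b$; skew shapes $\lambda/\mu$ are set differences of partition diagrams, not identified up to translation. A $k$-tuple of shapes is $\boldsymbol\mu=(\mu^{(0)},\dots,\mu^{(k-1)})$; its cells are the disjoint union of the cells of the components. $\mathrm{SYT}(\boldsymbol\mu)$ is the set of bijections $\mathbf{T}$ from the cells of $\boldsymbol\mu$ to $[n]$ increasing along rows (left to right) and columns (bottom to top) of each component. The shifted content of a cell $x$ of $\mu^{(i)}$ is $\tilde c(x)=k\,c(x)+i$. The content reading word $w(\mathbf{T})$ lists entries in increasing order of shifted content, cells of equal shifted content (one diagonal of one component) read southwest to northeast. $\mathrm{dInv}(\mathbf{T})=\{(x,y):0<\tilde c(y)-\tilde c(x)<k,\ \mathbf{T}(x)>\mathbf{T}(y)\}$, $\mathrm{dinv}(\mathbf{T})=|\mathrm{dInv}(\mathbf{T})|$, $\mathrm{dDes}(\mathbf{T})=\{(x,y):\tilde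 c(y)-\tilde c(x)=k,\ \mathbf{T}(x)>\mathbf{T}(y)\}$. For entries $a,b$, $\mathrm{dist}(a,b)$ is the absolute difference of shifted contents of their cells, and $\mathrm{dist}(i-1,i,i+1)$ is the maximum pairwise distance. On a word $w$ with distinct letters containing $i-1,i,i+1$: $d_i(w)=w$ if $i$ lies positionally between $i-1$ and $i+1$, otherwise $d_i$ swaps $i$ with whichever of $i\pm1$ is farther from $i$. The twisted involution $\tilde d_i(w)=w$ if $i$ lies between $i-1$ and $i+1$; otherwise, writing $abc$ for the subword of $w$ formed by $i-1,i,i+1$ in positional order, $\tilde d_i$ replaces it (in the same three positions) by $bca$ if $a=i$ and by $cab$ if $c=i$. Define $D_i(\mathbf{T})$ as the filling of the same cells whose reading word is $d_i(w(\mathbf{T}))$ if $\mathrm{dist}(i-1,i,i+1)>k$ in $\mathbf{T}$, and $\tilde d_i(w(\mathbf{T}))$ if $\mathrm{dist}(i-1,i,i+1)\le k$. *)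

(* Defs.v *)
From mathcomp Require Import all_boot all_order all_algebra.
Set Implicit Arguments. Unset Strict Implicit. Unset Printing Implicit Defensive.
Import Order.TTheory GRing.Theory Num.Theory.

(* A partition: a weakly decreasing sequence of positive parts.
   Its (French) diagram is {(a,b) | b < size lam, a < lam_b},
   a = column, b = row. *)
Definition is_partition (lam : seq nat) : bool :=
  sorted geq lam && all (fun x => 0 < x) lam.

Definition in_diagram (lam : seq nat) (a b : nat) : bool :=
  (b < size lam) && (a < nth 0 lam b).

(* A skew shape lam/mu is the set difference of the diagrams
   (not identified up to translation). *)
Definition skew_shape := (seq nat * seq nat)%type.

Definition is_skew_shape (s : skew_shape) : bool :=
  is_partition s.1 && is_partition s.2.

Definition in_skew (s : skew_shape) (a b : nat) : bool :=
  in_diagram s.1 a b && ~~ in_diagram s.2 a b.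

Definition cell := (nat * (nat * nat))%type.
Definition ccomp (c : cell) := c.1.
Definition ccol (c : cell) := c.2.1.
Definition crow (c : cell) := c.2.2.

Definition content (c : cell) : int := (Posz (ccol c) - Posz (crow c))%R.

Definition shcontent (k : nat) (c : cell) : int :=
  (Posz k * content c + Posz (ccomp c))%R.

Definition all_cells (sh : seq skew_shape) : seq cell :=
  flatten [seq
    [seq (i, ab) | ab <- [seq (a, b) |
        b <- iota 0 (size (nth ([::], [::]) sh i).1),
        a <- iota 0 (nth 0 (nth ([::], [::]) sh i).1 b)]
      & in_skew (nth ([::], [::]) sh i) ab.1 ab.2]
  | i <- iota 0 (size sh)].

(* content reading order: increasing shifted content; cells of equal shifted
   content (same diagonal of the same component) read southwest to
   northeast, i.e. by increasing row. *)
Definition read_le (k : nat) (c d : cell) : bool :=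
  (shcontent k c < shcontent k d)%R ||
  ((shcontent k c == shcontent k d) && (crow c <= crow d)).

Definition rcells (sh : seq skew_shape) : seq cell :=
  sort (read_le (size sh)) (all_cells sh).

Definition in_cells (sh : seq skew_shape) (c : cell) : bool := c \in all_cells sh.

(* fillings: functions from cells to nat (only values on cells matter) *)
Definition filling := cell -> nat.

Definition rword (sh : seq skew_shape) (T : filling) : seq nat :=
  map T (rcells sh).

Definition of_word (sh : seq skew_shape) (w : seq nat) : filling :=
  fun c => nth 0 w (index c (rcells sh)).

Definition SYT (sh : seq skew_shape) (T : filling) : Prop :=
  perm_eq (rword sh T) (iota 1 (size (rcells sh))) /\
  (forall x y, in_cells sh x -> in_cells sh y ->
     ccomp x = ccomp y -> crow x = crow y -> ccol x < ccol y -> T x < T y) /\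
  (forall x y, in_cells sh x -> in_cells sh y ->
     ccomp x = ccomp y -> ccol x = ccol y -> crow x < crow y -> T x < T y).

Definition cell_pairs (sh : seq skew_shape) : seq (cell * cell) :=
  [seq (x, y) | x <- rcells sh, y <- rcells sh].

Definition dInv (sh : seq skew_shape) (T : filling) : seq (cell * cell) :=
  [seq p <- cell_pairs sh |
     (0 < shcontent (size sh) p.2 - shcontent (size sh) p.1)%R &&
     (shcontent (size sh) p.2 - shcontent (size sh) p.1 < Posz (size sh))%R &&
     (T p.1 > T p.2)].

Definition dinv (sh : seq skew_shape) (T : filling) : nat := size (dInv sh T).

Definition dDes (sh : seq skew_shape) (T : filling) : seq (cell * cell) :=
  [seq p <- cell_pairs sh |
     (shcontent (size sh) p.2 - shcontent (size sh) p.1 == Posz (size sh))%R &&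
     (T p.1 > T p.2)].

Definition cell_of (sh : seq skew_shape) (T : filling) (v : nat) : cell :=
  nth (0, (0, 0)) (rcells sh) (index v (rword sh T)).

Definition dist (sh : seq skew_shape) (T : filling) (u v : nat) : int :=
  `|(shcontent (size sh) (cell_of sh T u) - shcontent (size sh) (cell_of sh T v))%R|%R.

Definition dist3 (sh : seq skew_shape) (T : filling) (i : nat) : int :=
  Num.max (dist sh T i.-1 i) (Num.max (dist sh T i i.+1) (dist sh T i.-1 i.+1)).

Definition between (w : seq nat) (i : nat) : bool :=
  let p := index i.-1 w in let q := index i w in let r := index i.+1 w in
  ((p < q) && (q < r)) || ((r < q) && (q < p)).

Definition posdist (m n : nat) : nat := maxn (m - n) (n - m).

Definition swap_letters (w : seq nat) (u v : nat) : seq nat :=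
  set_nth 0 (set_nth 0 w (index u w) v) (index v w) u.

Definition d_op (i : nat) (w : seq nat) : seq nat :=
  if between w i then w else
  let q := index i w in
  if posdist q (index i.-1 w) > posdist q (index i.+1 w)
  then swap_letters w i i.-1
  else swap_letters w i i.+1.

Definition td_op (i : nat) (w : seq nat) : seq nat :=
  if between w i then w else
  let ps := sort leq [:: index i.-1 w; index i w; index i.+1 w] in
  let p1 := nth 0 ps 0 in let p2 := nth 0 ps 1 in let p3 := nth 0 ps 2 in
  let a := nth 0 w p1 in let b := nth 0 w p2 in let c := nth 0 w p3 in
  if a == i then set_nth 0 (set_nth 0 (set_nth 0 w p1 b) p2 c) p3 a
  else if c == i then set_nth 0 (set_nth 0 (set_nth 0 w p1 c) p2 a) p3 b
  else w.

Definition D_op (sh : seq skew_shape) (i : nat) (T : filling) : filling :=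
  if (Posz (size sh) < dist3 sh T i)%R
  then of_word sh (d_op i (rword sh T))
  else of_word sh (td_op i (rword sh T)).

(* Main.v *)
Require Import Defs.
From mathcomp Require Import all_boot all_order all_algebra.
From mathcomp Require Import zify.
Set Implicit Arguments. Unset Strict Implicit. Unset Printing Implicit Defensive.
Import Order.TTheory GRing.Theory Num.Theory.

Lemma in_all_cells sh (c : cell) : (c \in all_cells sh) =
  (c.1 < size sh) && in_skew (nth ([::],[::]) sh c.1) c.2.1 c.2.2.
Proof.
case: c => i0 [a b] /=.
apply/flattenP/andP => [[s /mapP [j] Hj -> /mapP [[a' b']]]|[Hi Hs]].
  rewrite mem_filter /= => /andP [Hsk _] [-> -> ->].
  by rewrite mem_iota /= in Hj; split.
exists [seq (i0, ab) | ab <- [seq (a0, b0) | b0 <- iota 0 (size (nth ([::], [::]) sh i0).1),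
        a0 <- iota 0 (nth 0 (nth ([::], [::]) sh i0).1 b0)]
      & in_skew (nth ([::], [::]) sh i0) ab.1 ab.2].
  by apply/mapP; exists i0 => //; rewrite mem_iota.
apply/mapP; exists (a, b) => //; rewrite mem_filter /= Hs /=.
move: Hs; rewrite /in_skew /in_diagram => /andP [/andP [Hb Ha] _].
apply/allpairsPdep; exists b, a; split => //; rewrite mem_iota //.
Qed.

Lemma sorted_geq_nth (l : seq nat) j j' : sorted geq l -> j <= j' -> j' < size l ->
  nth 0 l j' <= nth 0 l j.
Proof.
move=> Hs Hjj' Hj'.
have tr : transitive geq by move=> ? ? ? h1 h2; exact: leq_trans h2 h1.
have := @sorted_leq_nth _ geq tr (fun x => leqnn x) 0 l Hs j.
move/(_ j' _ _ Hjj'); apply; rewrite inE //; exact: leq_ltn_trans Hj'.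
Qed.

Lemma conv_skew (s : skew_shape) a b a' b' a'' b'' :
  is_skew_shape s -> in_skew s a b -> in_skew s a' b' ->
  a <= a'' <= a' -> b <= b'' <= b' -> in_skew s a'' b''.
Proof.
case: s => lam mu; rewrite /is_skew_shape /is_partition /in_skew /in_diagram /=.
move=> /andP [/andP [Sl _] /andP [Sm _]] /andP [/andP [Hb Ha] Hm] /andP [/andP [Hb' Ha'] Hm'].
move=> /andP [Ha1 Ha2] /andP [Hb1 Hb2].
have Hb'' : b'' < size lam by apply: leq_ltn_trans Hb'.
rewrite Hb'' /=; apply/andP; split.
  apply: leq_ltn_trans Ha2 _; apply: leq_trans Ha' _; exact: sorted_geq_nth.
apply/negP => /andP [Hbm Ham]; move/negP: Hm; apply; apply/andP.
have Hbm' : b < size mu by apply: leq_ltn_trans Hbm.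
split => //; apply: leq_ltn_trans Ha1 _; apply: leq_trans Ham _; exact: sorted_geq_nth.
Qed.

Notation sc sh := (shcontent (size sh)).

Lemma read_le_trans k : transitive (read_le k).
Proof.
move=> y x z; rewrite /read_le => /orP [H1|/andP [/eqP E1 H1]] /orP [H2|/andP [/eqP E2 H2]].
- by rewrite (lt_trans H1 H2).
- by rewrite -E2 H1.
- by rewrite E1 H2.
- by rewrite E1 E2 eqxx (leq_trans H1 H2) orbT.
Qed.

Lemma read_le_total k : total (read_le k).
Proof.
move=> x y; rewrite /read_le.
case: (ltgtP (shcontent k x) (shcontent k y)) => //= _.
exact: leq_total.
Qed.

Lemma rcells_sorted sh : sorted (read_le (size sh)) (rcells sh).
Proof. exact: (sort_sorted (@read_le_total _)). Qed.

Lemma mem_rcells sh c : (c \in rcells sh) = in_cells sh c.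
Proof. by rewrite mem_sort. Qed.

Lemma in_cellsE sh (c : cell) : in_cells sh c =
  (c.1 < size sh) && in_skew (nth ([::],[::]) sh c.1) c.2.1 c.2.2.
Proof. exact: in_all_cells. Qed.

Lemma conv_cells sh (x y : cell) a b : all is_skew_shape sh ->
  in_cells sh x -> in_cells sh y -> x.1 = y.1 ->
  x.2.1 <= a <= y.2.1 -> x.2.2 <= b <= y.2.2 -> in_cells sh (x.1, (a, b)).
Proof.
move=> Hall; rewrite !in_cellsE => /andP [Hx Sx] /andP [Hy Sy] E Ha Hb.
rewrite /= Hx /=; apply: (conv_skew _ Sx _ Ha Hb); first by apply: (all_nthP _ Hall).
by rewrite E.
Qed.

Section SYTfacts.
Variables (sh : seq skew_shape) (T : filling).
Hypothesis Hall : all is_skew_shape sh.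
Hypothesis HT : SYT sh T.

Lemma syt_uniq : uniq (rword sh T).
Proof. case: HT => Hp _; by rewrite (perm_uniq Hp) iota_uniq. Qed.

Lemma rc_uniq : uniq (rcells sh).
Proof. by have := syt_uniq; rewrite /rword => /map_uniq. Qed.

Lemma syt_inj x y : in_cells sh x -> in_cells sh y -> T x = T y -> x = y.
Proof.
rewrite -!mem_rcells => Hx Hy E.
have U := syt_uniq; rewrite /rword in U.
rewrite -(nth_index (0,(0,0)) Hx) -(nth_index (0,(0,0)) Hy); congr nth.
apply/eqP; rewrite -(nth_uniq 0 _ _ U) ?size_map ?index_mem //.
by rewrite !(nth_map (0,(0,0))) ?index_mem // !nth_index // E.
Qed.

Lemma syt_mono (x y : cell) : in_cells sh x -> in_cells sh y -> x.1 = y.1 ->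
  x.2.1 <= y.2.1 -> x.2.2 <= y.2.2 -> x != y -> T x < T y.
Proof.
case: HT => _ [Hrow Hcol] Hx Hy E Ha Hb Hne.
case: (ltngtP x.2.2 y.2.2) Hb => // Hb _.
  have Hz : in_cells sh (x.1, (y.2.1, x.2.2)).
    by apply: (conv_cells Hall Hx Hy E); rewrite ?Ha ?leqnn ?(ltnW Hb).
  apply: (@leq_ltn_trans (T (x.1, (y.2.1, x.2.2)))).
    case: (ltngtP x.2.1 y.2.1) Ha => // Ha' _.
      by apply: ltnW; apply: Hrow.
    by case: x {Hrow Hcol Hx Hne Hz Hb E} Ha' => x1 [x2 x3] /= ->.
  by apply: Hcol => //; rewrite /ccomp /= E.
case: (ltngtP x.2.1 y.2.1) Ha => // Ha _.
  by apply: Hrow.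
move: Hne; case: x Hx E Ha Hb => x1 [x2 x3]; case: y Hy => y1 [y2 y3] /= _ _ -> -> ->.
by rewrite eqxx.
Qed.
End SYTfacts.

Section SYTfacts2.
Variables (sh : seq skew_shape) (T : filling).
Hypothesis Hall : all is_skew_shape sh.
Hypothesis HT : SYT sh T.

Lemma syt_diag3 (x y : cell) : in_cells sh x -> in_cells sh y -> x.1 = y.1 ->
  x.2.1 + y.2.2 = y.2.1 + x.2.2 -> x.2.2 < y.2.2 -> T x + 3 <= T y.
Proof.
move=> Hx Hy E Hc Hr.
have Ha : x.2.1 < y.2.1 by lia.
have Hz1 : in_cells sh (x.1, (x.2.1.+1, x.2.2)).
  by apply: (conv_cells Hall Hx Hy E) => //; apply/andP; split => //; exact: ltnW.
have Hz2 : in_cells sh (x.1, (x.2.1, x.2.2.+1)).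
  by apply: (conv_cells Hall Hx Hy E) => //; apply/andP; split => //; exact: ltnW.
have N : forall z : cell, z != (z.1, (z.2.1.+1, z.2.2)).
  by case=> a [b c]; apply/eqP => -[]; lia.
have N2 : forall z : cell, z != (z.1, (z.2.1, z.2.2.+1)).
  by case=> a [b c]; apply/eqP => -[]; lia.
have h1 := syt_mono Hall HT Hx Hz1 erefl (leqnSn _) (leqnn _) (N x).
have h2 := syt_mono Hall HT Hx Hz2 erefl (leqnn _) (leqnSn _) (N2 x).
have h3 : T (x.1, (x.2.1.+1, x.2.2)) < T y.
  apply: (syt_mono Hall HT Hz1 Hy E) => //=; first exact: ltnW.
  by apply/eqP => Ey; rewrite -Ey /= in Hr; rewrite ltnn in Hr.
have h4 : T (x.1, (x.2.1, x.2.2.+1)) < T y.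
  apply: (syt_mono Hall HT Hz2 Hy E) => //=; first exact: ltnW.
  by apply/eqP => Ey; rewrite -Ey /= in Ha; rewrite ltnn in Ha.
have h5 : T (x.1, (x.2.1.+1, x.2.2)) != T (x.1, (x.2.1, x.2.2.+1)).
  apply/eqP => /(syt_inj HT Hz1 Hz2) []; lia.
lia.
Qed.

Lemma syt_row1 (x y : cell) : in_cells sh x -> in_cells sh y -> x.1 = y.1 ->
  x.2.2 = y.2.2 -> x.2.1 < y.2.1 -> T y = (T x).+1 -> y.2.1 = x.2.1.+1.
Proof.
move=> Hx Hy E Er Ha HTe.
case: (ltngtP y.2.1 x.2.1.+1) => // H; first lia.
have Hz : in_cells sh (x.1, (x.2.1.+1, x.2.2)).
  by apply: (conv_cells Hall Hx Hy E) => //; rewrite ?Er ?leqnn //; apply/andP; split => //; exact: ltnW.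
have h1 : T x < T (x.1, (x.2.1.+1, x.2.2)).
  by case: HT => _ [Hrow _]; apply: Hrow.
have h2 : T (x.1, (x.2.1.+1, x.2.2)) < T y.
  by case: HT => _ [Hrow _]; apply: Hrow; rewrite /ccomp /crow //= E.
lia.
Qed.

Lemma syt_col1 (x y : cell) : in_cells sh x -> in_cells sh y -> x.1 = y.1 ->
  x.2.1 = y.2.1 -> x.2.2 < y.2.2 -> T y = (T x).+1 -> y.2.2 = x.2.2.+1.
Proof.
move=> Hx Hy E Er Ha HTe.
case: (ltngtP y.2.2 x.2.2.+1) => // H; first lia.
have Hz : in_cells sh (x.1, (x.2.1, x.2.2.+1)).
  by apply: (conv_cells Hall Hx Hy E) => //; rewrite ?Er ?leqnn //; apply/andP; split => //; exact: ltnW.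
have h1 : T x < T (x.1, (x.2.1, x.2.2.+1)).
  by case: HT => _ [_ Hcol]; apply: Hcol.
have h2 : T (x.1, (x.2.1, x.2.2.+1)) < T y.
  by case: HT => _ [_ Hcol]; apply: Hcol; rewrite /ccomp /ccol //= E.
lia.
Qed.
End SYTfacts2.

Lemma shcontentE k (c : cell) :
  shcontent k c = (Posz k * (Posz c.2.1 - Posz c.2.2) + Posz c.1)%R.
Proof. by []. Qed.

Lemma sc_eq k (x y : cell) : x.1 < k -> y.1 < k -> shcontent k x = shcontent k y ->
  x.1 = y.1 /\ x.2.1 + y.2.2 = y.2.1 + x.2.2.
Proof.
rewrite !shcontentE => h1 h2 E.
have D : ((Posz x.2.1 - Posz x.2.2) - (Posz y.2.1 - Posz y.2.2) = 0)%R by nia.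
split; lia.
Qed.

Definition tau (u v x : nat) : nat := if x == u then v else if x == v then u else x.
Definition cyc (a b c x : nat) : nat :=
  if x == a then b else if x == b then c else if x == c then a else x.

Lemma tau_inj u v : injective (tau u v).
Proof.
move=> x y; rewrite /tau; repeat case: eqP; lia.
Qed.

Lemma cyc_inj a b c : a != b -> b != c -> a != c -> injective (cyc a b c).
Proof.
move=> /eqP ab /eqP bc /eqP ac x y; rewrite /cyc; repeat case: eqP; lia.
Qed.

Lemma set2_map (w : seq nat) j1 j2 y1 y2 g : uniq w -> j1 < size w -> j2 < size w ->
  y1 = g (nth 0 w j1) -> y2 = g (nth 0 w j2) ->
  (forall x, x \in w -> x != nth 0 w j1 -> x != nth 0 w j2 -> g x = x) ->
  set_nth 0 (set_nth 0 w j1 y1) j2 y2 = map g w.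
Proof.
move=> U h1 h2 e1 e2 Hg.
apply: (@eq_from_nth _ 0).
  by rewrite !size_set_nth size_map; apply/eqP; rewrite eqn_leq !geq_max; lia.
move=> m; rewrite !size_set_nth => Hm.
have Hm' : m < size w by move: Hm; lia.
rewrite (nth_map 0) // nth_set_nth /=.
case: ifP => [/eqP->|/negbT n2]; first by rewrite e2.
rewrite nth_set_nth /=; case: ifP => [/eqP->|/negbT n1]; first by rewrite e1.
rewrite Hg ?mem_nth //.
  by rewrite nth_uniq.
by rewrite nth_uniq.
Qed.

Lemma set3_map (w : seq nat) j1 j2 j3 y1 y2 y3 g : uniq w ->
  j1 < size w -> j2 < size w -> j3 < size w ->
  y1 = g (nth 0 w j1) -> y2 = g (nth 0 w j2) -> y3 = g (nth 0 w j3) ->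
  (forall x, x \in w -> x != nth 0 w j1 -> x != nth 0 w j2 -> x != nth 0 w j3 -> g x = x) ->
  set_nth 0 (set_nth 0 (set_nth 0 w j1 y1) j2 y2) j3 y3 = map g w.
Proof.
move=> U h1 h2 h3 e1 e2 e3 Hg.
apply: (@eq_from_nth _ 0).
  by rewrite !size_set_nth size_map; apply/eqP; rewrite eqn_leq !geq_max; lia.
move=> m; rewrite !size_set_nth => Hm.
have Hm' : m < size w by move: Hm; lia.
rewrite (nth_map 0) // nth_set_nth /=.
case: ifP => [/eqP->|/negbT n3]; first by rewrite e3.
rewrite nth_set_nth /=; case: ifP => [/eqP->|/negbT n2]; first by rewrite e2.
rewrite nth_set_nth /=; case: ifP => [/eqP->|/negbT n1]; first by rewrite e1.
rewrite Hg ?mem_nth //.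
- by rewrite nth_uniq.
- by rewrite nth_uniq.
- by rewrite nth_uniq.
Qed.

Lemma swap_map (w : seq nat) u v : uniq w -> u \in w -> v \in w ->
  swap_letters w u v = map (tau u v) w.
Proof.
move=> U hu hv; rewrite /swap_letters.
apply: set2_map; rewrite ?index_mem ?nth_index //.
- by rewrite /tau eqxx.
- rewrite /tau eqxx; case: eqP => //.
- by move=> x _ /negbTE n1 /negbTE n2; rewrite /tau n1 n2.
Qed.

Lemma sort3 (l : seq nat) x y z : x < y -> y < z -> perm_eq l [:: x; y; z] ->
  sort leq l = [:: x; y; z].
Proof.
move=> h1 h2 hp; apply: (sorted_eq leq_trans anti_leq).
- exact: (sort_sorted leq_total).
- by rewrite /= (ltnW h1) (ltnW h2).
- by rewrite perm_sort.
Qed.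

Definition cellw sh (w : seq nat) v : cell := nth (0,(0,0)) (rcells sh) (index v w).
Definition distw sh (w : seq nat) u v : int :=
  `|(shcontent (size sh) (cellw sh w u) - shcontent (size sh) (cellw sh w v))%R|%R.
Definition dist3w sh w i : int :=
  Num.max (distw sh w i.-1 i) (Num.max (distw sh w i i.+1) (distw sh w i.-1 i.+1)).
Definition phi sh i w : seq nat :=
  if (Posz (size sh) < dist3w sh w i)%R then d_op i w else td_op i w.

Lemma D_op_phi sh i T : D_op sh i T = of_word sh (phi sh i (rword sh T)).
Proof.
rewrite /D_op /phi; have -> : dist3 sh T i = dist3w sh (rword sh T) i by reflexivity.
by case: ifP.
Qed.

Section WordCases.
Variables (sh : seq skew_shape) (i : nat) (w : seq nat).
Hypotheses (U : uniq w) (Hi : 1 < i) (H1 : i.-1 \in w) (H2 : i \in w) (H3 : i.+1 \in w).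
Local Notation p := (index i.-1 w).
Local Notation q := (index i w).
Local Notation r := (index i.+1 w).

Lemma phi_between : between w i -> phi sh i w = w.
Proof. by move=> B; rewrite /phi /d_op /td_op B; case: ifP. Qed.

Lemma phi_C1 : q < p -> p < r -> phi sh i w =
  if (Posz (size sh) < dist3w sh w i)%R then map (tau i i.+1) w else map (cyc i i.-1 i.+1) w.
Proof.
move=> h1 h2; have hp := H1; have hq := H2; have hr := H3.
rewrite -index_mem in hp; rewrite -index_mem in hq; rewrite -index_mem in hr.
rewrite /phi /d_op /td_op /between; case: ifP => _; rewrite ifF; try lia.
  rewrite /posdist ifF; first exact: swap_map.
  apply/negbTE; rewrite -leqNgt; lia.
rewrite (@sort3 _ q p r) //; last by rewrite perm_sym; apply/permP => f /=; lia.
rewrite /= !nth_index // eqxx.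
apply: set3_map; rewrite ?nth_index //; rewrite /cyc; try by repeat case: eqP; lia.
by move=> x _ /negbTE -> /negbTE -> /negbTE ->.
Qed.

Lemma phi_C2 : q < r -> r < p -> phi sh i w =
  if (Posz (size sh) < dist3w sh w i)%R then map (tau i i.-1) w else map (cyc i i.+1 i.-1) w.
Proof.
move=> h1 h2; have hp := H1; have hq := H2; have hr := H3.
rewrite -index_mem in hp; rewrite -index_mem in hq; rewrite -index_mem in hr.
rewrite /phi /d_op /td_op /between; case: ifP => _; rewrite ifF; try lia.
  rewrite /posdist ifT; first exact: swap_map.
  lia.
rewrite (@sort3 _ q r p) //; last by rewrite perm_sym; apply/permP => f /=; lia.
rewrite /= !nth_index // eqxx.
apply: set3_map; rewrite ?nth_index //; rewrite /cyc; try by repeat case: eqP; lia.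
by move=> x _ /negbTE -> /negbTE -> /negbTE ->.
Qed.

Lemma phi_C3 : p < r -> r < q -> phi sh i w =
  if (Posz (size sh) < dist3w sh w i)%R then map (tau i i.-1) w else map (cyc i i.+1 i.-1) w.
Proof.
move=> h1 h2; have hp := H1; have hq := H2; have hr := H3.
rewrite -index_mem in hp; rewrite -index_mem in hq; rewrite -index_mem in hr.
rewrite /phi /d_op /td_op /between; case: ifP => _; rewrite ifF; try lia.
  rewrite /posdist ifT; first exact: swap_map.
  lia.
rewrite (@sort3 _ p r q) //; last by rewrite perm_sym; apply/permP => f /=; lia.
rewrite /= !nth_index // eqxx.
have -> : (i.-1 == i) = false by apply/eqP; lia.
apply: set3_map; rewrite ?nth_index //; rewrite /cyc; try by repeat case: eqP; lia.
by move=> x _ /negbTE -> /negbTE -> /negbTE ->.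
Qed.

Lemma phi_C4 : r < p -> p < q -> phi sh i w =
  if (Posz (size sh) < dist3w sh w i)%R then map (tau i i.+1) w else map (cyc i i.-1 i.+1) w.
Proof.
move=> h1 h2; have hp := H1; have hq := H2; have hr := H3.
rewrite -index_mem in hp; rewrite -index_mem in hq; rewrite -index_mem in hr.
rewrite /phi /d_op /td_op /between; case: ifP => _; rewrite ifF; try lia.
  rewrite /posdist ifF; first exact: swap_map.
  apply/negbTE; rewrite -leqNgt; lia.
rewrite (@sort3 _ r p q) //; last by rewrite perm_sym; apply/permP => f /=; lia.
rewrite /= !nth_index // eqxx.
have -> : (i.+1 == i) = false by apply/eqP; lia.
apply: set3_map; rewrite ?nth_index //; rewrite /cyc; try by repeat case: eqP; lia.
by move=> x _ /negbTE -> /negbTE -> /negbTE ->.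
Qed.
End WordCases.

Definition M3 (a b c : int) : int := Num.max `|(a - b)%R|%R (Num.max `|(b - c)%R|%R `|(a - c)%R|%R).

Lemma dist3wE sh w i : dist3w sh w i =
  M3 (shcontent (size sh) (cellw sh w i.-1)) (shcontent (size sh) (cellw sh w i))
     (shcontent (size sh) (cellw sh w i.+1)).
Proof. by []. Qed.

Lemma M3_acb a b c : M3 a c b = M3 a b c. Proof. rewrite /M3; lia. Qed.
Lemma M3_bac a b c : M3 b a c = M3 a b c. Proof. rewrite /M3; lia. Qed.
Lemma M3_bca a b c : M3 b c a = M3 a b c. Proof. rewrite /M3; lia. Qed.
Lemma M3_cab a b c : M3 c a b = M3 a b c. Proof. rewrite /M3; lia. Qed.

Lemma index_map_g (g : nat -> nat) (w : seq nat) u v : injective g -> g u = v ->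
  index v (map g w) = index u w.
Proof. by move=> Hg <-; rewrite index_map. Qed.

Lemma cellw_map sh (g : nat -> nat) (w : seq nat) u v : injective g -> g u = v ->
  cellw sh (map g w) v = cellw sh w u.
Proof. by move=> Hg E; rewrite /cellw (index_map_g _ Hg E). Qed.

Lemma mem_map_g (g : nat -> nat) (w : seq nat) u v : g u = v -> u \in w -> v \in map g w.
Proof. by move=> <- H; apply: map_f. Qed.

Ltac ev := rewrite /tau /cyc; repeat case: eqP; lia.

Lemma map_invol (g g' : nat -> nat) (w : seq nat) : (forall x, g' (g x) = x) ->
  map g' (map g w) = w.
Proof. by move=> H; rewrite -map_comp map_id_in // => x _ /=; rewrite H. Qed.

Lemma mapw_basic (g : nat -> nat) (w : seq nat) a b c i : uniq w -> injective g ->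
  g a = i.-1 -> g b = i -> g c = i.+1 -> a \in w -> b \in w -> c \in w ->
  [/\ uniq (map g w), i.-1 \in map g w, i \in map g w & i.+1 \in map g w].
Proof.
move=> U Hg e1 e2 e3 ha hb hc; split; rewrite ?map_inj_uniq //.
- exact: (mem_map_g e1 ha).
- exact: (mem_map_g e2 hb).
- exact: (mem_map_g e3 hc).
Qed.

Lemma mapw_dist sh (g : nat -> nat) (w : seq nat) a b c i : injective g ->
  g a = i.-1 -> g b = i -> g c = i.+1 ->
  dist3w sh (map g w) i = M3 (shcontent (size sh) (cellw sh w a))
     (shcontent (size sh) (cellw sh w b)) (shcontent (size sh) (cellw sh w c)).
Proof.
by move=> Hg e1 e2 e3; rewrite dist3wE (cellw_map _ _ Hg e1) (cellw_map _ _ Hg e2) (cellw_map _ _ Hg e3).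
Qed.

Lemma index_neq (w : seq nat) u v : u \in w -> v \in w -> u != v -> index u w != index v w.
Proof.
move=> hu hv; apply: contra => /eqP E; apply/eqP.
by rewrite -(nth_index 0 hu) -(nth_index 0 hv) E.
Qed.


Lemma tauL u v : tau u v u = v. Proof. by rewrite /tau eqxx. Qed.
Lemma tauR u v : tau u v v = u. Proof. by rewrite /tau eqxx; case: eqP. Qed.
Lemma tauO u v x : x != u -> x != v -> tau u v x = x.
Proof. by rewrite /tau => /negbTE -> /negbTE ->. Qed.
Lemma tauK u v x : tau u v (tau u v x) = x.
Proof.
case: (eqVneq x u) => [->|xu]; first by rewrite tauL tauR.
case: (eqVneq x v) => [->|xv]; first by rewrite tauR tauL.
by rewrite !tauO.
Qed.
Lemma cycA a b c : cyc a b c a = b. Proof. by rewrite /cyc eqxx. Qed.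
Lemma cycB a b c : b != a -> cyc a b c b = c.
Proof. by rewrite /cyc eqxx => /negbTE ->. Qed.
Lemma cycC a b c : c != a -> c != b -> cyc a b c c = a.
Proof. by rewrite /cyc eqxx => /negbTE -> /negbTE ->. Qed.
Lemma cycO a b c x : x != a -> x != b -> x != c -> cyc a b c x = x.
Proof. by rewrite /cyc => /negbTE -> /negbTE -> /negbTE ->. Qed.
Lemma cycK a b c x : a != b -> b != c -> a != c -> cyc a c b (cyc a b c x) = x.
Proof.
move=> ab bc ac.
have ba : b != a by rewrite eq_sym. have cb : c != b by rewrite eq_sym.
have ca : c != a by rewrite eq_sym.
case: (eqVneq x a) => [->|xa]; first by rewrite cycA cycC.
case: (eqVneq x b) => [->|xb]; first by rewrite cycB // cycB.
case: (eqVneq x c) => [->|xc]; first by rewrite cycC // cycA.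
by rewrite !cycO.
Qed.

Lemma phi_invol sh i w : uniq w -> 1 < i -> i.-1 \in w -> i \in w -> i.+1 \in w ->
  phi sh i (phi sh i w) = w.
Proof.
move=> U Hi h1 h2 h3.
have ne1 : i.-1 != i by apply/negP => /eqP; lia.
have ne2 : i != i.+1 by apply/negP => /eqP; lia.
have ne3 : i.-1 != i.+1 by apply/negP => /eqP; lia.
have ne4 : i != i.-1 by rewrite eq_sym.
have ne5 : i.+1 != i by rewrite eq_sym.
have ne6 : i.+1 != i.-1 by rewrite eq_sym.
have npq := index_neq h1 h2 ne1; have nqr := index_neq h2 h3 ne2.
have npr := index_neq h1 h3 ne3.
case Bw: (between w i); first by rewrite !phi_between.
have ti1 := @tau_inj i i.+1; have ti2 := @tau_inj i i.-1.
have ci1 : injective (cyc i i.-1 i.+1) by apply: cyc_inj; apply/negP => /eqP; lia.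
have ci2 : injective (cyc i i.+1 i.-1) by apply: cyc_inj; apply/negP => /eqP; lia.
move: Bw; rewrite /between => Bw.
case: (ltngtP (index i w) (index i.-1 w)) => [qp|pq|]; last by move=> E; move: npq; rewrite E eqxx.
- case: (ltngtP (index i.-1 w) (index i.+1 w)) => [pr|rp|]; last by move=> E; move: npr; rewrite E eqxx.
  +
    rewrite (@phi_C1 sh i w U Hi h1 h2 h3 qp pr); case: ifP => B.
    * have e1 : tau i i.+1 i.-1 = i.-1 by rewrite tauO.
      have e2 : tau i i.+1 i.+1 = i by rewrite tauR.
      have e3 : tau i i.+1 i = i.+1 by rewrite tauL.
      have [U' m1 m2 m3] := mapw_basic U ti1 e1 e2 e3 h1 h3 h2.
      move: (index_map_g w ti1 e1) (index_map_g w ti1 e2) (index_map_g w ti1 e3) => ip iq ir.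
      rewrite (@phi_C4 sh i _ U' Hi m1 m2 m3); [| by rewrite ?ip ?iq ?ir | by rewrite ?ip ?iq ?ir].
      rewrite (@mapw_dist sh _ w _ _ _ _ ti1 e1 e2 e3) M3_acb -dist3wE B.
      by apply: map_invol => x; rewrite ?tauK ?cycK.
    * have e1 : cyc i i.-1 i.+1 i = i.-1 by rewrite cycA.
      have e2 : cyc i i.-1 i.+1 i.+1 = i by rewrite cycC.
      have e3 : cyc i i.-1 i.+1 i.-1 = i.+1 by rewrite cycB.
      have [U' m1 m2 m3] := mapw_basic U ci1 e1 e2 e3 h2 h3 h1.
      move: (index_map_g w ci1 e1) (index_map_g w ci1 e2) (index_map_g w ci1 e3) => ip iq ir.
      rewrite (@phi_C3 sh i _ U' Hi m1 m2 m3); [| by rewrite ?ip ?iq ?ir | by rewrite ?ip ?iq ?ir].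
      rewrite (@mapw_dist sh _ w _ _ _ _ ci1 e1 e2 e3) M3_bca -dist3wE B.
      by apply: map_invol => x; rewrite ?tauK ?cycK.
  + case: (ltngtP (index i w) (index i.+1 w)) => [qr|rq|]; last by move=> E; move: nqr; rewrite E eqxx.
    *
      rewrite (@phi_C2 sh i w U Hi h1 h2 h3 qr rp); case: ifP => B.
      -- have e1 : tau i i.-1 i = i.-1 by rewrite tauL.
         have e2 : tau i i.-1 i.-1 = i by rewrite tauR.
         have e3 : tau i i.-1 i.+1 = i.+1 by rewrite tauO.
         have [U' m1 m2 m3] := mapw_basic U ti2 e1 e2 e3 h2 h1 h3.
         move: (index_map_g w ti2 e1) (index_map_g w ti2 e2) (index_map_g w ti2 e3) => ip iq ir.
      rewrite (@phi_C3 sh i _ U' Hi m1 m2 m3); [| by rewrite ?ip ?iq ?ir | by rewrite ?ip ?iq ?ir].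
         rewrite (@mapw_dist sh _ w _ _ _ _ ti2 e1 e2 e3) M3_bac -dist3wE B.
         by apply: map_invol => x; rewrite ?tauK ?cycK.
      -- have e1 : cyc i i.+1 i.-1 i.+1 = i.-1 by rewrite cycB.
         have e2 : cyc i i.+1 i.-1 i.-1 = i by rewrite cycC.
         have e3 : cyc i i.+1 i.-1 i = i.+1 by rewrite cycA.
         have [U' m1 m2 m3] := mapw_basic U ci2 e1 e2 e3 h3 h1 h2.
         move: (index_map_g w ci2 e1) (index_map_g w ci2 e2) (index_map_g w ci2 e3) => ip iq ir.
      rewrite (@phi_C4 sh i _ U' Hi m1 m2 m3); [| by rewrite ?ip ?iq ?ir | by rewrite ?ip ?iq ?ir].
         rewrite (@mapw_dist sh _ w _ _ _ _ ci2 e1 e2 e3) M3_cab -dist3wE B.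
         by apply: map_invol => x; rewrite ?tauK ?cycK.
    * exfalso; move: Bw; rewrite rq qp /= orbT; done.
- case: (ltngtP (index i.-1 w) (index i.+1 w)) => [pr|rp|]; last by move=> E; move: npr; rewrite E eqxx.
  + case: (ltngtP (index i w) (index i.+1 w)) => [qr|rq|]; last by move=> E; move: nqr; rewrite E eqxx.
    * exfalso; move: Bw; rewrite qr pq; done.
    *
      rewrite (@phi_C3 sh i w U Hi h1 h2 h3 pr rq); case: ifP => B.
      -- have e1 : tau i i.-1 i = i.-1 by rewrite tauL.
         have e2 : tau i i.-1 i.-1 = i by rewrite tauR.
         have e3 : tau i i.-1 i.+1 = i.+1 by rewrite tauO.
         have [U' m1 m2 m3] := mapw_basic U ti2 e1 e2 e3 h2 h1 h3.
         move: (index_map_g w ti2 e1) (index_map_g w ti2 e2) (index_map_g w ti2 e3) => ip iq ir.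
      rewrite (@phi_C2 sh i _ U' Hi m1 m2 m3); [| by rewrite ?ip ?iq ?ir | by rewrite ?ip ?iq ?ir].
         rewrite (@mapw_dist sh _ w _ _ _ _ ti2 e1 e2 e3) M3_bac -dist3wE B.
         by apply: map_invol => x; rewrite ?tauK ?cycK.
      -- have e1 : cyc i i.+1 i.-1 i.+1 = i.-1 by rewrite cycB.
         have e2 : cyc i i.+1 i.-1 i.-1 = i by rewrite cycC.
         have e3 : cyc i i.+1 i.-1 i = i.+1 by rewrite cycA.
         have [U' m1 m2 m3] := mapw_basic U ci2 e1 e2 e3 h3 h1 h2.
         move: (index_map_g w ci2 e1) (index_map_g w ci2 e2) (index_map_g w ci2 e3) => ip iq ir.
      rewrite (@phi_C1 sh i _ U' Hi m1 m2 m3); [| by rewrite ?ip ?iq ?ir | by rewrite ?ip ?iq ?ir].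
         rewrite (@mapw_dist sh _ w _ _ _ _ ci2 e1 e2 e3) M3_cab -dist3wE B.
         by apply: map_invol => x; rewrite ?tauK ?cycK.
  +
    rewrite (@phi_C4 sh i w U Hi h1 h2 h3 rp pq); case: ifP => B.
    * have e1 : tau i i.+1 i.-1 = i.-1 by rewrite tauO.
      have e2 : tau i i.+1 i.+1 = i by rewrite tauR.
      have e3 : tau i i.+1 i = i.+1 by rewrite tauL.
      have [U' m1 m2 m3] := mapw_basic U ti1 e1 e2 e3 h1 h3 h2.
      move: (index_map_g w ti1 e1) (index_map_g w ti1 e2) (index_map_g w ti1 e3) => ip iq ir.
      rewrite (@phi_C1 sh i _ U' Hi m1 m2 m3); [| by rewrite ?ip ?iq ?ir | by rewrite ?ip ?iq ?ir].
      rewrite (@mapw_dist sh _ w _ _ _ _ ti1 e1 e2 e3) M3_acb -dist3wE B.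
      by apply: map_invol => x; rewrite ?tauK ?cycK.
    * have e1 : cyc i i.-1 i.+1 i = i.-1 by rewrite cycA.
      have e2 : cyc i i.-1 i.+1 i.+1 = i by rewrite cycC.
      have e3 : cyc i i.-1 i.+1 i.-1 = i.+1 by rewrite cycB.
      have [U' m1 m2 m3] := mapw_basic U ci1 e1 e2 e3 h2 h3 h1.
      move: (index_map_g w ci1 e1) (index_map_g w ci1 e2) (index_map_g w ci1 e3) => ip iq ir.
      rewrite (@phi_C2 sh i _ U' Hi m1 m2 m3); [| by rewrite ?ip ?iq ?ir | by rewrite ?ip ?iq ?ir].
      rewrite (@mapw_dist sh _ w _ _ _ _ ci1 e1 e2 e3) M3_bca -dist3wE B.
      by apply: map_invol => x; rewrite ?tauK ?cycK.
Qed.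

Lemma of_word_rword sh T x : uniq (rcells sh) -> in_cells sh x -> of_word sh (rword sh T) x = T x.
Proof.
move=> U; rewrite -mem_rcells => Hx.
by rewrite /of_word /rword (nth_map (0,(0,0))) ?index_mem // nth_index.
Qed.

Lemma of_word_map sh T (g : nat -> nat) x : in_cells sh x ->
  of_word sh (map g (rword sh T)) x = g (T x).
Proof.
rewrite -mem_rcells => Hx.
by rewrite /of_word /rword (nth_map 0) ?size_map ?index_mem // (nth_map (0,(0,0))) ?index_mem // nth_index.
Qed.

Lemma rword_of_word sh w : uniq (rcells sh) -> size w = size (rcells sh) ->
  rword sh (of_word sh w) = w.
Proof.
move=> U S; apply: (@eq_from_nth _ 0); first by rewrite size_map S.
move=> j; rewrite size_map => Hj.
by rewrite /rword (nth_map (0,(0,0))) // /of_word index_uniq.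
Qed.

Lemma SYT_ext sh T1 T2 : (forall x, in_cells sh x -> T1 x = T2 x) -> SYT sh T1 -> SYT sh T2.
Proof.
move=> E [Hp [Hr Hc]]; split; last split.
- have -> : rword sh T2 = rword sh T1.
    by apply/eq_in_map => x; rewrite mem_rcells => /E.
  exact: Hp.
- by move=> x y Hx Hy ? ? ?; rewrite -!E //; apply: Hr.
- by move=> x y Hx Hy ? ? ?; rewrite -!E //; apply: Hc.
Qed.

Lemma cell_pairsP sh (p : cell * cell) : p \in cell_pairs sh ->
  in_cells sh p.1 /\ in_cells sh p.2.
Proof.
by case/allpairsP => [[x y] [hx hy ->]]; rewrite -!mem_rcells.
Qed.

Lemma mem_cell_pairs sh (x y : cell) : in_cells sh x -> in_cells sh y -> (x, y) \in cell_pairs sh.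
Proof. by rewrite -!mem_rcells => hx hy; apply/allpairsP; exists (x, y). Qed.

Lemma dDes_ext sh T1 T2 : (forall x, in_cells sh x -> T1 x = T2 x) -> dDes sh T1 = dDes sh T2.
Proof.
move=> E; apply: eq_in_filter => p /cell_pairsP [h1 h2].
by rewrite !E.
Qed.

Lemma dinv_ext sh T1 T2 : (forall x, in_cells sh x -> T1 x = T2 x) -> dinv sh T1 = dinv sh T2.
Proof.
move=> E; rewrite /dinv /dInv; congr size; apply: eq_in_filter => p /cell_pairsP [h1 h2].
by rewrite !E.
Qed.

Lemma cell_pairs_uniq sh : uniq (rcells sh) -> uniq (cell_pairs sh).
Proof.
move=> U; apply: allpairs_uniq => //; case=> a b [c d] _ _ /= E; exact: E.
Qed.

Lemma count_split (A : eqType) (s E : seq A) (P P' : pred A) : uniq s -> uniq E ->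
  {subset E <= s} -> (forall x, x \in s -> x \notin E -> P x = P' x) ->
  count P E = count P' E -> count P s = count P' s.
Proof.
move=> Us UE sub HP HE.
have split : forall (Q : pred A) (t : seq A),
    count Q t = count Q (filter (mem E) t) + count Q (filter (predC (mem E)) t).
  move=> Q; elim => // x t IH; rewrite /= IH.
  by case: (x \in E) => /=; case: (Q x) => /=; rewrite ?add0n ?addSn ?addnS.
have pe : perm_eq (filter (mem E) s) E.
  apply: uniq_perm; rewrite ?filter_uniq // => x; rewrite mem_filter /=.
  by apply/andP/idP => [[]|h] //; split => //; apply: sub.
rewrite (split P s) (split P' s) !(permP pe) HE; congr addn.
apply: eq_in_count => x; rewrite mem_filter /= => /andP [h1 h2]; exact: HP.
Qed.

Definition invP (sh : seq skew_shape) (T : filling) (p : cell * cell) : bool :=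
  [&& (0 < shcontent (size sh) p.2 - shcontent (size sh) p.1)%R,
      (shcontent (size sh) p.2 - shcontent (size sh) p.1 < Posz (size sh))%R &
      (T p.1 > T p.2)].

Lemma dinvE sh T : dinv sh T = count (invP sh T) (cell_pairs sh).
Proof.
rewrite /dinv /dInv size_filter; apply: eq_count => p; by rewrite /invP andbA.
Qed.

Section Core.
Variables (sh : seq skew_shape) (T : filling) (g : nat -> nat).
Hypotheses (Hall : all is_skew_shape sh) (HT : SYT sh T) (Hg : injective g).
Hypothesis Hgw : forall x, x \in rword sh T -> g x \in rword sh T.

Lemma core_SYT :
  (forall x y, in_cells sh x -> in_cells sh y -> T x < T y -> g (T y) < g (T x) ->
     ~ (x.1 = y.1 /\ (x.2.2 = y.2.2 \/ x.2.1 = y.2.1))) ->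
  SYT sh (fun c => g (T c)).
Proof.
move=> H; have HT' := HT; case: HT' => Hp [Hr Hc]; split; last split.
- have -> : rword sh (fun c => g (T c)) = map g (rword sh T) by rewrite /rword -map_comp.
  apply: perm_trans Hp.
  have U := syt_uniq HT.
  have U' : uniq (map g (rword sh T)) by rewrite map_inj_uniq.
  have sub : {subset map g (rword sh T) <= rword sh T}.
    by move=> x /mapP [y hy ->]; apply: Hgw.
  have [_ eqm] := uniq_min_size U' sub (eq_leq (esym (size_map g (rword sh T)))).
  exact: uniq_perm.
- move=> x y hx hy E1 E2 E3.
  have lt := Hr x y hx hy E1 E2 E3.
  case: (ltngtP (g (T x)) (g (T y))) => // [gt|/Hg eq].
    by exfalso; apply: (H x y hx hy lt gt); split => //; left.
  by rewrite eq ltnn in lt.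
- move=> x y hx hy E1 E2 E3.
  have lt := Hc x y hx hy E1 E2 E3.
  case: (ltngtP (g (T x)) (g (T y))) => // [gt|/Hg eq].
    by exfalso; apply: (H x y hx hy lt gt); split => //; right.
  by rewrite eq ltnn in lt.
Qed.

Lemma core_dDes :
  (forall x y, in_cells sh x -> in_cells sh y ->
     (shcontent (size sh) y - shcontent (size sh) x = Posz (size sh))%R ->
     (T y < T x) = (g (T y) < g (T x))) ->
  dDes sh (fun c => g (T c)) = dDes sh T.
Proof.
move=> H; apply: eq_in_filter => p /cell_pairsP [h1 h2].
by case: eqP => //= E; rewrite H.
Qed.

Lemma core_dinv (E : seq (cell * cell)) : uniq E -> {subset E <= cell_pairs sh} ->
  (forall p, p \in cell_pairs sh -> p \notin E -> invP sh (fun c => g (T c)) p = invP sh T p) ->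
  count (invP sh (fun c => g (T c))) E = count (invP sh T) E ->
  dinv sh (fun c => g (T c)) = dinv sh T.
Proof.
move=> UE sub HP HE; rewrite !dinvE.
apply: (count_split (cell_pairs_uniq (rc_uniq HT)) UE sub) => //.
Qed.
End Core.

Lemma neq_boolE (x y : bool) : x != y -> (x /\ ~~ y) \/ (~~ x /\ y).
Proof. by case: x; case: y; auto. Qed.

Lemma tau_flip i j a b : (j.+1 = i \/ j = i.+1) ->
  (b < a) != (tau i j b < tau i j a) -> (a = i /\ b = j) \/ (a = j /\ b = i).
Proof.
move=> Hij /neq_boolE; rewrite /tau; repeat case: eqP; lia.
Qed.

Lemma cyc_flip i u v a b : 0 < i -> (u = i.-1 /\ v = i.+1) \/ (u = i.+1 /\ v = i.-1) ->
  (b < a) != (cyc i u v b < cyc i u v a) ->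
  (a = u /\ (b = i \/ b = v)) \/ (b = u /\ (a = i \/ a = v)).
Proof.
move=> Hi Huv /neq_boolE; rewrite /cyc; repeat case: eqP; lia.
Qed.

Lemma cyc_count i u v a c : 0 < i -> (u = i.-1 /\ v = i.+1) \/ (u = i.+1 /\ v = i.-1) ->
  (a = i /\ c = v) \/ (a = v /\ c = i) ->
  (u < a) + (c < u) = (cyc i u v u < cyc i u v a) + (cyc i u v c < cyc i u v u).
Proof.
move=> Hi [[-> ->]|[-> ->]] [[-> ->]|[-> ->]]; rewrite /cyc; repeat case: eqP; try lia;
  move=> *; repeat case: ltnP; lia.
Qed.

Lemma sc_row k (x y : cell) : x.1 = y.1 -> x.2.2 = y.2.2 ->
  (shcontent k y - shcontent k x = Posz k * (Posz y.2.1 - Posz x.2.1))%R.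
Proof. rewrite !shcontentE => e1 e2; rewrite e1 e2; lia. Qed.

Lemma sc_col k (x y : cell) : x.1 = y.1 -> x.2.1 = y.2.1 ->
  (shcontent k y - shcontent k x = Posz k * (Posz x.2.2 - Posz y.2.2))%R.
Proof. rewrite !shcontentE => e1 e2; rewrite e1 e2; lia. Qed.

Lemma cell_eq (x y : cell) : x.1 = y.1 -> x.2.1 = y.2.1 -> x.2.2 = y.2.2 -> x = y.
Proof. by case: x => a [b c]; case: y => a' [b' c'] /= -> -> ->. Qed.

Lemma sc_far k (x y : cell) : x != y -> x.1 = y.1 -> (x.2.2 = y.2.2 \/ x.2.1 = y.2.1) ->
  (Posz k <= `|(shcontent k y - shcontent k x)%R|)%R.
Proof.
move=> ne e1 [e2|e2].
  rewrite sc_row //.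
  have : x.2.1 <> y.2.1 by move=> e3; move/eqP: ne; apply; exact: cell_eq.
  nia.
rewrite sc_col //.
have : x.2.2 <> y.2.2 by move=> e3; move/eqP: ne; apply; exact: cell_eq.
nia.
Qed.

Section Geo.
Variables (sh : seq skew_shape) (T : filling).
Hypotheses (Hall : all is_skew_shape sh) (HT : SYT sh T).

Lemma sc_adj (x y : cell) : in_cells sh x -> in_cells sh y -> x.1 = y.1 ->
  (x.2.2 = y.2.2 \/ x.2.1 = y.2.1) -> T y = (T x).+1 ->
  `|(shcontent (size sh) y - shcontent (size sh) x)%R|%R = Posz (size sh).
Proof.
move=> hx hy e1 e2 eT; have HT' := HT; case: HT' => _ [Hr Hc].
case: e2 => e2.
  rewrite sc_row //.
  case: (ltngtP x.2.1 y.2.1) => h.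
  - have := syt_row1 Hall HT hx hy e1 e2 h eT; lia.
  - have := Hr y x hy hx (esym e1) (esym e2) h; lia.
  - have : x = y by exact: cell_eq.
    by move=> E; rewrite E in eT; lia.
rewrite sc_col //.
case: (ltngtP x.2.2 y.2.2) => h.
- have := syt_col1 Hall HT hx hy e1 e2 h eT; lia.
- have := Hc y x hy hx (esym e1) (esym e2) h; lia.
- have : x = y by exact: cell_eq.
  by move=> E; rewrite E in eT; lia.
Qed.
End Geo.

Section Branch.
Variables (sh : seq skew_shape) (T : filling).
Hypotheses (Hall : all is_skew_shape sh) (HT : SYT sh T).
Local Notation sc := (shcontent (size sh)).

Lemma branch_d (x1 x3 : cell) i j : in_cells sh x1 -> in_cells sh x3 -> T x1 = i -> T x3 = j ->
  (j.+1 = i \/ j = i.+1) -> (Posz (size sh) < `|(sc x3 - sc x1)%R|)%R ->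
  i \in rword sh T -> j \in rword sh T ->
  [/\ SYT sh (fun c => tau i j (T c)), dDes sh (fun c => tau i j (T c)) = dDes sh T &
      dinv sh (fun c => tau i j (T c)) = dinv sh T].
Proof.
move=> h1 h3 T1 T3 Hij Hd wi wj.
have Hg := @tau_inj i j.
have Hgw : forall x, x \in rword sh T -> tau i j x \in rword sh T.
  by move=> x hx; rewrite /tau; case: eqP => _ //; case: eqP => _.
have flip : forall x y, in_cells sh x -> in_cells sh y ->
    (T y < T x) != (tau i j (T y) < tau i j (T x)) -> (x = x1 /\ y = x3) \/ (x = x3 /\ y = x1).
  move=> x y hx hy /(tau_flip Hij) [[ex ey]|[ex ey]]; [left|right]; split;
    apply: (syt_inj HT) => //; by rewrite ?ex ?ey ?T1 ?T3.
have adjk : x1.1 = x3.1 -> (x1.2.2 = x3.2.2 \/ x1.2.1 = x3.2.1) ->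
    `|(sc x3 - sc x1)%R|%R = Posz (size sh).
  move=> e1 e2; case: Hij => Hij.
    have e2' : x3.2.2 = x1.2.2 \/ x3.2.1 = x1.2.1 by case: e2; auto.
    have eT : T x1 = (T x3).+1 by rewrite T1 T3.
    by rewrite distrC; apply: (sc_adj Hall HT h3 h1 (esym e1) e2' eT).
  apply: (sc_adj Hall HT h1 h3 e1 e2); by rewrite T1 T3.
split.
- apply: (core_SYT HT Hg Hgw) => x y hx hy lt gt [e1 e2].
  have fl : (T x < T y) != (tau i j (T x) < tau i j (T y)) by rewrite lt ltnNge (ltnW gt).
  case: (flip y x hy hx fl) => [[ey ex]|[ey ex]]; subst x y.
  + have e2' : x1.2.2 = x3.2.2 \/ x1.2.1 = x3.2.1 by case: e2; auto.
    have := adjk (esym e1) e2'; move: Hd; clear; lia.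
  + have := adjk e1 e2; move: Hd; clear; lia.
- apply: core_dDes => x y hx hy E.
  case: (boolP ((T y < T x) == (tau i j (T y) < tau i j (T x)))) => [/eqP //|nf].
  by exfalso; case: (flip x y hx hy nf) => [[ex ey]|[ex ey]]; subst x y; move: E Hd; clear; lia.
- apply: (core_dinv (E := [::]) HT) => //.
  case=> x y /cell_pairsP [hx hy] _ /=; rewrite /invP /=.
  case: (boolP ((T y < T x) == (tau i j (T y) < tau i j (T x)))) => [/eqP -> //|nf].
  case: (flip x y hx hy nf) => [[ex ey]|[ex ey]]; subst x y.
  + apply/idP/idP => /and3P [c1 c2 _]; exfalso; move: c1 c2 Hd; clear; lia.
  + apply/idP/idP => /and3P [c1 c2 _]; exfalso; move: c1 c2 Hd; clear; lia.
Qed.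

Lemma branch_t (x1 x2 x3 : cell) i u v :
  in_cells sh x1 -> in_cells sh x2 -> in_cells sh x3 -> 0 < i ->
  (u = i.-1 /\ v = i.+1) \/ (u = i.+1 /\ v = i.-1) ->
  T x2 = u -> (T x1 = i /\ T x3 = v) \/ (T x1 = v /\ T x3 = i) ->
  (sc x1 < sc x2)%R -> (sc x2 < sc x3)%R -> (sc x3 - sc x1 <= Posz (size sh))%R ->
  i \in rword sh T -> u \in rword sh T -> v \in rword sh T ->
  [/\ SYT sh (fun c => cyc i u v (T c)), dDes sh (fun c => cyc i u v (T c)) = dDes sh T &
      dinv sh (fun c => cyc i u v (T c)) = dinv sh T].
Proof.
move=> h1 h2 h3 Hi Huv T2 T13 s12 s23 s13 wi wu wv.
have Hg : injective (cyc i u v) by apply: cyc_inj; apply/negP => /eqP; lia.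
have Hgw : forall x, x \in rword sh T -> cyc i u v x \in rword sh T.
  by move=> x hx; rewrite /cyc; case: eqP => _ //; case: eqP => _ //; case: eqP => _.
have cellof : forall y, in_cells sh y -> (T y = i \/ T y = v) -> y = x1 \/ y = x3.
  move=> y hy Hy.
  have hv1 : T y = T x1 -> y = x1 by apply: (syt_inj HT).
  have hv3 : T y = T x3 -> y = x3 by apply: (syt_inj HT).
  case: T13 => [[e1 e3]|[e1 e3]]; case: Hy => ey.
  - by left; apply: hv1; rewrite ey e1.
  - by right; apply: hv3; rewrite ey e3.
  - by right; apply: hv3; rewrite ey e3.
  - by left; apply: hv1; rewrite ey e1.
have cell2 : forall y, in_cells sh y -> T y = u -> y = x2.
  by move=> y hy ey; apply: (syt_inj HT) => //; rewrite ey T2.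
have flip : forall x y, in_cells sh x -> in_cells sh y ->
    (T y < T x) != (cyc i u v (T y) < cyc i u v (T x)) ->
    (x = x2 /\ (y = x1 \/ y = x3)) \/ (y = x2 /\ (x = x1 \/ x = x3)).
  move=> x y hx hy /(cyc_flip Hi Huv) [[ex ey]|[ey ex]].
    by left; split; [apply: cell2|apply: cellof].
  by right; split; [apply: cell2|apply: cellof].
split.
- apply: (core_SYT HT Hg Hgw) => x y hx hy lt gt [e1 e2].
  have ne : x != y by apply/eqP => E; rewrite E ltnn in lt.
  have fr := sc_far (size sh) ne e1 e2.
  have fl : (T x < T y) != (cyc i u v (T x) < cyc i u v (T y)) by rewrite lt ltnNge (ltnW gt).
  case: (flip y x hy hx fl) => [[ey [ex|ex]]|[ex [ey|ey]]]; subst x y; move: fr s12 s23 s13; clear; lia.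
- apply: core_dDes => x y hx hy E.
  case: (boolP ((T y < T x) == (cyc i u v (T y) < cyc i u v (T x)))) => [/eqP //|nf].
  by exfalso; case: (flip x y hx hy nf) => [[ex [ey|ey]]|[ey [ex|ex]]]; subst x y; move: E s12 s23 s13; clear; lia.
- have n12 : x1 != x2 by apply/eqP => E; rewrite E in s12; rewrite ltxx in s12.
  apply: (core_dinv (E := [:: (x1, x2); (x2, x3)]) HT).
  + by rewrite /= inE andbT; apply/eqP => -[E _]; move/eqP: n12.
  + by move=> p; rewrite !inE => /orP [/eqP->|/eqP->]; apply: mem_cell_pairs.
  + case=> x y /cell_pairsP [hx hy] hn /=; rewrite /invP /=.
    case: (boolP ((T y < T x) == (cyc i u v (T y) < cyc i u v (T x)))) => [/eqP -> //|nf].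
    case: (flip x y hx hy nf) => [[ex [ey|ey]]|[ey [ex|ex]]]; subst x y.
    * by apply/idP/idP => /and3P [c1 c2 _]; exfalso; move: c1 c2 s12 s23 s13; clear; lia.
    * by move: hn; rewrite !inE eqxx orbT.
    * by move: hn; rewrite !inE eqxx.
    * by apply/idP/idP => /and3P [c1 c2 _]; exfalso; move: c1 c2 s12 s23 s13; clear; lia.
  + rewrite /= /invP /=.
    have c1 : (0 < sc x2 - sc x1)%R by move: s12 s23 s13; clear; lia.
    have c2 : (sc x2 - sc x1 < Posz (size sh))%R by move: s12 s23 s13; clear; lia.
    have c3 : (0 < sc x3 - sc x2)%R by move: s12 s23 s13; clear; lia.
    have c4 : (sc x3 - sc x2 < Posz (size sh))%R by move: s12 s23 s13; clear; lia.
    rewrite c1 c2 c3 c4 /= !addn0 T2.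
    case: T13 => [[e1 e3]|[e1 e3]]; rewrite e1 e3; symmetry; apply: cyc_count => //; auto.
Qed.
End Branch.

Lemma cellw_facts sh T v : SYT sh T -> v \in rword sh T ->
  in_cells sh (cellw sh (rword sh T) v) /\ T (cellw sh (rword sh T) v) = v.
Proof.
move=> HT hv; have hi : index v (rword sh T) < size (rcells sh).
  by rewrite -(size_map T) -/(rword sh T) index_mem.
split; first by rewrite -mem_rcells /cellw mem_nth.
by rewrite /cellw -(nth_map _ 0) // -/(rword sh T) nth_index.
Qed.

Lemma sc_lt sh T a b : all is_skew_shape sh -> SYT sh T -> a < b -> b < size (rcells sh) ->
  T (nth (0,(0,0)) (rcells sh) b) <= T (nth (0,(0,0)) (rcells sh) a) + 2 ->
  T (nth (0,(0,0)) (rcells sh) a) <= T (nth (0,(0,0)) (rcells sh) b) + 2 ->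
  (shcontent (size sh) (nth (0,(0,0)) (rcells sh) a) <
   shcontent (size sh) (nth (0,(0,0)) (rcells sh) b))%R.
Proof.
move=> Hall HT ab bs t1 t2.
set x := nth (0,(0,0)) (rcells sh) a; set y := nth (0,(0,0)) (rcells sh) b.
have as_ : a < size (rcells sh) by apply: ltn_trans bs.
have hx : in_cells sh x by rewrite -mem_rcells mem_nth.
have hy : in_cells sh y by rewrite -mem_rcells mem_nth.
have rl : read_le (size sh) x y.
  apply: (sorted_ltn_nth (@read_le_trans _) _ (rcells_sorted sh)) => //.
move: rl; rewrite /read_le => /orP [//|/andP [/eqP E rr]].
exfalso.
have cx : x.1 < size sh by move: hx; rewrite in_cellsE => /andP [].
have cy : y.1 < size sh by move: hy; rewrite in_cellsE => /andP [].
have [e1 e2] := sc_eq cx cy E.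
case: (ltngtP x.2.2 y.2.2) rr => // h _.
  have := syt_diag3 Hall HT hx hy e1 e2 h; rewrite /x /y; lia.
have exy : x = y by apply: cell_eq => //; lia.
have U := rc_uniq HT.
move: exy; rewrite /x /y => /eqP; rewrite nth_uniq // => /eqP; lia.
Qed.

Lemma ord_lemma sh T u v : all is_skew_shape sh -> SYT sh T -> u \in rword sh T -> v \in rword sh T ->
  index u (rword sh T) < index v (rword sh T) -> u <= v + 2 -> v <= u + 2 ->
  (shcontent (size sh) (cellw sh (rword sh T) u) < shcontent (size sh) (cellw sh (rword sh T) v))%R.
Proof.
move=> Hall HT hu hv huv t1 t2.
have [_ eu] := cellw_facts HT hu; have [_ ev] := cellw_facts HT hv.
move: eu ev; rewrite /cellw => eu ev.
apply: (sc_lt (T := T)) => //.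
- by rewrite -(size_map T) -/(rword sh T) index_mem.
- by rewrite eu ev; lia.
- by rewrite eu ev; lia.
Qed.

Lemma M3_sorted (lo mid hi : int) : (lo < mid)%R -> (mid < hi)%R -> M3 lo mid hi = (hi - lo)%R.
Proof. rewrite /M3 => h1 h2; lia. Qed.

Theorem proposition5p1 (k : nat) (sh : seq skew_shape) (n : nat) :
  1 <= k -> size sh = k -> all is_skew_shape sh ->
  n = size (rcells sh) ->
  forall (T : filling), SYT sh T ->
  forall i : nat, 1 < i < n ->
    [/\ SYT sh (D_op sh i T),
        dDes sh (D_op sh i T) = dDes sh T,
        dinv sh (D_op sh i T) = dinv sh T &
        (forall x, in_cells sh x -> D_op sh i (D_op sh i T) x = T x)].
Proof.
move=> Hk Hsz Hall Hn T HT i /andP [Hi1 Hin].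
have U := syt_uniq HT; have Urc := rc_uniq HT.
have memw : forall v, 0 < v -> v <= n -> v \in rword sh T.
  by move=> v h1 h2; case: HT => Hp _; rewrite (perm_mem Hp) mem_iota; lia.
have w1 : i.-1 \in rword sh T by apply: memw; lia.
have w2 : i \in rword sh T by apply: memw; lia.
have w3 : i.+1 \in rword sh T by apply: memw; lia.
have Hi0 : 0 < i by lia.
have [g [Ephi [S1 S2 S3]]] : exists g : nat -> nat, phi sh i (rword sh T) = map g (rword sh T) /\
    [/\ SYT sh (fun c => g (T c)), dDes sh (fun c => g (T c)) = dDes sh T &
        dinv sh (fun c => g (T c)) = dinv sh T].
  set w := rword sh T.
  have cf := fun v (hv : v \in w) => cellw_facts HT hv.
  have [c1 T1] := cf _ w1; have [c2 T2] := cf _ w2; have [c3 T3] := cf _ w3.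
  have ord := ord_lemma Hall HT.
  have ne1 : i.-1 != i by apply/negP => /eqP; lia.
  have ne2 : i != i.+1 by apply/negP => /eqP; lia.
  have ne3 : i.-1 != i.+1 by apply/negP => /eqP; lia.
  have npq := index_neq w1 w2 ne1; have nqr := index_neq w2 w3 ne2.
  have npr := index_neq w1 w3 ne3.
  case Bw: (between w i).
    by exists (fun x => x); rewrite phi_between // map_id; split.
  move: Bw; rewrite /between => Bw.
  case: (ltngtP (index i w) (index i.-1 w)) => [qp|pq|E]; last by move: npq; rewrite E eqxx.
  - case: (ltngtP (index i.-1 w) (index i.+1 w)) => [pr|rp|E]; last by move: npr; rewrite E eqxx.
    +
      have o1 : (shcontent (size sh) (cellw sh w i) < shcontent (size sh) (cellw sh w i.-1))%R.
        by apply: ord => //; clear; lia.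
      have o2 : (shcontent (size sh) (cellw sh w i.-1) < shcontent (size sh) (cellw sh w i.+1))%R.
        by apply: ord => //; clear; lia.
      have EM : dist3w sh w i = (shcontent (size sh) (cellw sh w i.+1) - shcontent (size sh) (cellw sh w i))%R.
        by rewrite dist3wE -M3_bac (M3_sorted o1 o2).
      rewrite (@phi_C1 sh i w U Hi1 w1 w2 w3 qp pr) EM; case: ifP => B.
      * exists (tau i i.+1); split; first by [].
        apply: (branch_d Hall HT c2 c3 T2 T3 (or_intror erefl) _ w2 w3).
        by move: B; rewrite /w; clear; lia.
      * exists (cyc i i.-1 i.+1); split; first by [].
        apply: (branch_t Hall HT c2 c1 c3 Hi0 (or_introl (conj erefl erefl)) T1
                 (or_introl (conj T2 T3)) o1 o2 _ w2 w1 w3).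
        by move/negbT: B; rewrite -leNgt /w; clear; lia.
    + case: (ltngtP (index i w) (index i.+1 w)) => [qr|rq|E]; last by move: nqr; rewrite E eqxx.
      *
        have o1 : (shcontent (size sh) (cellw sh w i) < shcontent (size sh) (cellw sh w i.+1))%R.
          by apply: ord => //; clear; lia.
        have o2 : (shcontent (size sh) (cellw sh w i.+1) < shcontent (size sh) (cellw sh w i.-1))%R.
          by apply: ord => //; clear; lia.
        have EM : dist3w sh w i = (shcontent (size sh) (cellw sh w i.-1) - shcontent (size sh) (cellw sh w i))%R.
          by rewrite dist3wE M3_cab (M3_sorted o1 o2).
        rewrite (@phi_C2 sh i w U Hi1 w1 w2 w3 qr rp) EM; case: ifP => B.
        -- exists (tau i i.-1); split; first by [].
           apply: (branch_d Hall HT c2 c1 T2 T1 (or_introl (prednK Hi0)) _ w2 w1).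
           by move: B; rewrite /w; clear; lia.
        -- exists (cyc i i.+1 i.-1); split; first by [].
           apply: (branch_t Hall HT c2 c3 c1 Hi0 (or_intror (conj erefl erefl)) T3
                    (or_introl (conj T2 T1)) o1 o2 _ w2 w3 w1).
           by move/negbT: B; rewrite -leNgt /w; clear; lia.
      * by exfalso; move: Bw; rewrite rq qp /= orbT.
  - case: (ltngtP (index i.-1 w) (index i.+1 w)) => [pr|rp|E]; last by move: npr; rewrite E eqxx.
    + case: (ltngtP (index i w) (index i.+1 w)) => [qr|rq|E]; last by move: nqr; rewrite E eqxx.
      * by exfalso; move: Bw; rewrite qr pq.
      *
        have o1 : (shcontent (size sh) (cellw sh w i.-1) < shcontent (size sh) (cellw sh w i.+1))%R.
          by apply: ord => //; clear; lia.
        have o2 : (shcontent (size sh) (cellw sh w i.+1) < shcontent (size sh) (cellw sh w i))%R.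
          by apply: ord => //; clear; lia.
        have EM : dist3w sh w i = (shcontent (size sh) (cellw sh w i) - shcontent (size sh) (cellw sh w i.-1))%R.
          by rewrite dist3wE -M3_acb (M3_sorted o1 o2).
        rewrite (@phi_C3 sh i w U Hi1 w1 w2 w3 pr rq) EM; case: ifP => B.
        -- exists (tau i i.-1); split; first by [].
           apply: (branch_d Hall HT c2 c1 T2 T1 (or_introl (prednK Hi0)) _ w2 w1).
           by move: B; rewrite /w; clear; lia.
        -- exists (cyc i i.+1 i.-1); split; first by [].
           apply: (branch_t Hall HT c1 c3 c2 Hi0 (or_intror (conj erefl erefl)) T3
                    (or_intror (conj T1 T2)) o1 o2 _ w2 w3 w1).
           by move/negbT: B; rewrite -leNgt /w; clear; lia.
    +
      have o1 : (shcontent (size sh) (cellw sh w i.+1) < shcontent (size sh) (cellw sh w i.-1))%R.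
        by apply: ord => //; clear; lia.
      have o2 : (shcontent (size sh) (cellw sh w i.-1) < shcontent (size sh) (cellw sh w i))%R.
        by apply: ord => //; clear; lia.
      have EM : dist3w sh w i = (shcontent (size sh) (cellw sh w i) - shcontent (size sh) (cellw sh w i.+1))%R.
        by rewrite dist3wE M3_bca (M3_sorted o1 o2).
      rewrite (@phi_C4 sh i w U Hi1 w1 w2 w3 rp pq) EM; case: ifP => B.
      * exists (tau i i.+1); split; first by [].
        apply: (branch_d Hall HT c2 c3 T2 T3 (or_intror erefl) _ w2 w3).
        by move: B; rewrite /w; clear; lia.
      * exists (cyc i i.-1 i.+1); split; first by [].
        apply: (branch_t Hall HT c3 c1 c2 Hi0 (or_introl (conj erefl erefl)) T1
                 (or_intror (conj T3 T2)) o1 o2 _ w2 w1 w3).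
        by move/negbT: B; rewrite -leNgt /w; clear; lia.
have DE : forall x, in_cells sh x -> D_op sh i T x = g (T x).
  by move=> x hx; rewrite D_op_phi Ephi of_word_map.
split.
- by apply: SYT_ext S1 => x hx; rewrite DE.
- by rewrite (dDes_ext (T2 := fun c => g (T c)) DE) S2.
- by rewrite (dinv_ext (T2 := fun c => g (T c)) DE) S3.
- move=> x hx; rewrite !D_op_phi rword_of_word //.
    by rewrite phi_invol // of_word_rword.
  by rewrite Ephi size_map /rword size_map.
Qed.
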